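(* Let $G$ be a $k$-tree with at least $k+4$ vertices. Then there do not exist two adjacent vertices $v,w$ of degree exactly $k+1$ such that each of $v$ and $w$ is adjacent to a vertex of degree at most $k$.
   Context: $G$ is a finite simple undirected graph. A $k$-tree is a graph having a vertex ordering $\phi:V\to\{1,\dots,|V|\}$ such that, for every vertex $v$, the set of neighbours of $v$ preceding it in $\phi$ is a clique of size exactly $\min(k,\phi(v)-1)$. *)

(* Defs.v *)
From mathcomp Require Import all_boot all_order.
Set Implicit Arguments. Unset Strict Implicit. Unset Printing Implicit Defensive.

Definition simple_graph (T : finType) (e : rel T) : Prop :=
  symmetric e /\ irreflexive e.

Definition nbhd (T : finType) (e : rel T) (v : T) : {set T} := [set w | e v w].
Definition deg (T : finType) (e : rel T) (v : T) : nat := #|nbhd e v|.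

Definition is_clique (T : finType) (e : rel T) (S : {set T}) : Prop :=
  forall x y, x \in S -> y \in S -> x != y -> e x y.

(* k-tree: there is a vertex ordering phi : V -> {1..|V|} (here 0-based,
   phi : T -> 'I_#|T| bijective, so position p (0-based) corresponds to
   phi(v) = p+1) such that for every v, the neighbours of v preceding it
   form a clique of size exactly min(k, phi(v) - 1) = min(k, p). *)
Definition is_ktree (T : finType) (e : rel T) (k : nat) : Prop :=
  simple_graph e /\
  exists phi : T -> 'I_#|T|,
    bijective phi /\
    forall v : T,
      let P := [set w in nbhd e v | (phi w < phi v)%N] in
      is_clique e P /\ #|P| = minn k (phi v).

(* Main.v *)
Require Import Defs.
From mathcomp Require Import all_boot all_order.
Set Implicit Arguments. Unset Strict Implicit. Unset Printing Implicit Defensive.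

Definition Pre (T : finType) (e : rel T) n (phi : T -> 'I_n) (v : T) : {set T} :=
  [set w in nbhd e v | (phi w < phi v)%N].

Definition good (T : finType) (e : rel T) (k : nat) (phi : T -> 'I_#|T|) :=
  [/\ symmetric e, irreflexive e, injective phi &
      forall v, is_clique e (Pre e phi v) /\ #|Pre e phi v| = minn k (phi v)].

Lemma card_prefix (T : finType) n (phi : T -> 'I_n) p :
  injective phi -> #|[set w | (phi w < p)%N]| <= p.
Proof.
move=> inj.
set S := [set w | _].
have -> : #|S| = size (map (fun w => nat_of_ord (phi w)) (enum S)).
  by rewrite size_map cardE.
rewrite -[p in _ <= p](size_iota 0 p).
apply: uniq_leq_size.
  rewrite map_inj_uniq ?enum_uniq //.
  by move=> a b /val_inj /inj.
move=> i /mapP [w]; rewrite mem_enum inE => Hw ->.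
by rewrite mem_iota.
Qed.

Lemma prefixE (T : finType) e k (phi : T -> 'I_#|T|) z :
  good e k phi -> phi z <= k -> Pre e phi z = [set w | (phi w < phi z)%N].
Proof.
case=> _ _ inj HP Hz.
apply/eqP; rewrite eqEcard; apply/andP; split.
  by apply/subsetP=> w; rewrite !inE => /andP[].
have [_ ->] := HP z.
by rewrite (minn_idPr Hz) card_prefix.
Qed.

Lemma base_adj (T : finType) e k (phi : T -> 'I_#|T|) u z :
  good e k phi -> phi u < phi z -> phi z <= k -> e z u.
Proof.
move=> G Huz Hz.
have : u \in Pre e phi z by rewrite (prefixE G) // inE.
by rewrite inE => /andP[]; rewrite inE.
Qed.

Lemma clique_k1 (T : finType) e k (phi : T -> 'I_#|T|) u v :
  good e k phi -> bijective phi -> k < #|T| -> (u = v \/ e u v) ->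
  exists C : {set T}, [/\ is_clique e C, #|C| = k.+1, u \in C & v \in C].
Proof.
move=> G [g phiK gK] Hk Huv.
have [Hs Hi inj HP] := G.
have cl : forall z, k <= phi z -> is_clique e (z |: Pre e phi z) /\ #|z |: Pre e phi z| = k.+1.
  move=> z Hz; have [Hc Hc'] := HP z; split.
    move=> a b; rewrite !inE => /predU1P[->|Ha] /predU1P[->|Hb] Hab.
    - by rewrite eqxx in Hab.
    - by case/andP: Hb.
    - by rewrite Hs; case/andP: Ha.
    - by apply: Hc => //; rewrite /Pre /nbhd !inE.
  rewrite cardsU1 Hc' (minn_idPl Hz) /Pre inE ltnn andbF //.
wlog le_uv : u v Huv / phi u <= phi v.
  move=> W; case: (leqP (phi u) (phi v)) => h; first exact: W.
  have [|C [? ? ? ?]] := W v u _ (ltnW h); last by exists C.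
  by case: Huv => [->|H]; [left|right; rewrite Hs].
case: (leqP k (phi v)) => hv.
  have [c1 c2] := cl v hv; exists (v |: Pre e phi v); split => //; last by rewrite setU11.
  case: Huv => [->|H]; first by rewrite setU11.
  rewrite !inE; apply/orP; right; rewrite Hs H /=.
  rewrite ltn_neqAle le_uv andbT; apply/negP => /eqP /val_inj /inj E.
  by move: H; rewrite E Hi.
pose z := g (Ordinal Hk).
have Hz : phi z = k :> nat by rewrite /z gK.
have [c1 c2] := cl z (eq_leq (esym Hz)).
exists (z |: Pre e phi z); split => //; apply/setU1P; right;
  rewrite (prefixE G) ?Hz // inE ?Hz //.
exact: leq_ltn_trans hv.
Qed.

Lemma simplicial (T : finType) e k (phi : T -> 'I_#|T|) x :
  good e k phi -> bijective phi -> k < #|T| -> deg e x <= k ->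
  is_clique e (nbhd e x) /\ deg e x = k.
Proof.
move=> G B Hk Hx.
have [C [Cc CC Cx _]] := clique_k1 G B Hk (or_introl (erefl x)).
have sub : C :\ x \subset nbhd e x.
  apply/subsetP=> y; rewrite !inE => /andP[yx yC]; apply: Cc => //; by rewrite eq_sym.
have cd : #|C :\ x| = k by move: CC; rewrite (cardsD1 x) Cx add1n => -[].
have E : C :\ x = nbhd e x.
  apply/eqP; rewrite eqEcard sub cd; exact: Hx.
split; last by rewrite /deg -E.
move=> a b; rewrite -E !inE => /andP[_ Ha] /andP[_ Hb]; exact: Cc.
Qed.

Lemma common (T : finType) e k (phi : T -> 'I_#|T|) u v :
  good e k phi -> bijective phi -> k < #|T| -> e u v ->
  k.-1 <= #|nbhd e u :&: nbhd e v|.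
Proof.
move=> G B Hk Huv.
have [Hs Hi _ _] := G.
have [C [Cc CC Cu Cv]] := clique_k1 G B Hk (or_intror Huv).
have uv : u != v by apply/eqP => E; move: Huv; rewrite E Hi.
have sub : C :\: [set u; v] \subset nbhd e u :&: nbhd e v.
  apply/subsetP=> y; rewrite !inE negb_or => /andP[/andP[yu yv] yC].
  by rewrite !(Cc u y) 1?eq_sym // (Cc v y) // eq_sym.
apply: leq_trans (subset_leq_card sub).
rewrite cardsD CC.
have -> : C :&: [set u; v] = [set u; v].
  apply/setIidPr; apply/subsetP=> y; rewrite !inE => /orP[] /eqP ->//.
by rewrite cards2 uv subn2.
Qed.

Lemma closure (T : finType) e k (phi : T -> 'I_#|T|) (X U : {set T}) t0 :
  good e k phi -> t0 \in X -> X \subset U ->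
  (forall z, z \in X -> nbhd e z \subset U) ->
  #|U :\: X| < k -> #|U| < #|T| -> False.
Proof.
move=> G Xt0 XU NU cUX cU.
have [Hs Hi inj HP] := G.
have [o0 Ho0] : exists o, o \notin U.
  case: (pickP [pred o | o \notin U]) => [o Ho|H]; first by exists o.
  have E : U = setT by apply/setP=> w; rewrite inE; apply/negPn; rewrite -[_ \notin _]/([pred o | o \notin U] w) H.
  by move: cU; rewrite E cardsT ltnn.
case: (arg_minnP (fun w => nat_of_ord (phi w)) Xt0) => t Xt tmin.
case: (arg_minnP (fun w => nat_of_ord (phi w)) (Ho0 : o0 \in [pred w | w \notin U])) => o /= oU omin.
case: (leqP k (phi t)) => ht.
  have : Pre e phi t \subset U :\: X.
    apply/subsetP=> w; rewrite /Pre !inE => /andP[etw wt].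
    rewrite (subsetP (NU t Xt)) ?inE // andbT.
    by apply/negP => /tmin; rewrite leqNgt wt.
  move/subset_leq_card; have [_ ->] := HP t; rewrite (minn_idPl ht) leqNgt cUX //.
case: (leqP k (phi o)) => ho.
  have : Pre e phi o \subset U :\: X.
    apply/subsetP=> w; rewrite /Pre !inE => /andP[eow wo].
    have wU : w \in U by apply/negPn/negP => /omin; rewrite leqNgt wo.
    rewrite wU andbT; apply/negP => wX.
    by move: oU; rewrite (subsetP (NU w wX)) // inE Hs.
  move/subset_leq_card; have [_ ->] := HP o; rewrite (minn_idPl ho) leqNgt cUX //.
have tU : t \in U by exact: (subsetP XU).
have neq : nat_of_ord (phi t) != phi o by apply/negP => /eqP /val_inj /inj E; move: oU; rewrite -E tU.
have eto : e t o.
  case: (ltngtP (phi t) (phi o)) neq => // h _.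
    by rewrite Hs; apply: (base_adj G) h (ltnW ho).
  by apply: (base_adj G) h (ltnW ht).
by move: oU; rewrite (subsetP (NU t Xt)) // inE.
Qed.

From mathcomp Require Import zify.

Lemma arith0 (k n : nat) : k + 4 <= n -> k < n.
Proof. lia. Qed.

Lemma arith1 (a b k n c : nat) : a + b = k.+2 + k.+2 -> k.+1 + c <= b -> k + 4 <= n -> 0 < k ->
  a - (4 - c) < k /\ a < n.
Proof. lia. Qed.

Theorem mainTheorem13 (T : finType) (e : rel T) (k : nat) :
  is_ktree e k -> (k + 4 <= #|T|)%N ->
  ~ (exists v w : T,
       [/\ e v w, deg e v = k.+1, deg e w = k.+1,
           (exists x, e v x /\ (deg e x <= k)%N) &
           (exists y, e w y /\ (deg e y <= k)%N)]).
Proof.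
move=> [[Hs Hi] [phi [B HP]]] Hn [v [w [evw dv dw [x [evx dx]] [y [ewy dy]]]]].
have G : good e k phi by split => //; exact: bij_inj B.
have Hk : k < #|T| by apply: arith0 Hn.
have [Cx dxk] := simplicial G B Hk dx.
have [Cy dyk] := simplicial G B Hk dy.
have mem : forall a b, (b \in nbhd e a) = e a b by move=> a b; rewrite inE.
have sA : nbhd e x \subset v |: nbhd e v.
  apply/subsetP=> z zx; rewrite !inE; case: eqP => //= /eqP zv.
  by apply: Cx => //; [rewrite mem Hs | rewrite eq_sym].
have sB : nbhd e y \subset w |: nbhd e w.
  apply/subsetP=> z zy; rewrite !inE; case: eqP => //= /eqP zw.
  by apply: Cy => //; [rewrite mem Hs | rewrite eq_sym].
have cv : #|v |: nbhd e v| = k.+2 by rewrite cardsU1 mem Hi -/(deg e v) dv.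
have cw : #|w |: nbhd e w| = k.+2 by rewrite cardsU1 mem Hi -/(deg e w) dw.
set U := (v |: nbhd e v) :|: (w |: nbhd e w).
set I := (v |: nbhd e v) :&: (w |: nbhd e w).
have cUI : #|U| + #|I| = k.+2 + k.+2 by rewrite cardsUI cv cw.
have k1 : 0 < k.
  rewrite -dxk card_gt0; apply/set0Pn; exists v; by rewrite mem Hs.
have NUv : nbhd e v \subset U by apply/subsetP=> z zv; rewrite in_setU !in_setU1 zv orbT.
have NUw : nbhd e w \subset U by apply/subsetP=> z zv; rewrite in_setU !in_setU1 zv !orbT.
have vw : v != w by apply/eqP => E; move: evw; rewrite E Hi.
have xv : x != v by apply/eqP => E; move: evx; rewrite E Hi.
have xw : x != w by apply/eqP => E; move: dxk; rewrite /deg E -/(deg e w) dw => /eqP; rewrite -[_ == _]/(k.+1 == k) (gtn_eqF (ltnSn k)).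
have vy : v != y by apply/eqP => E; move: dyk; rewrite /deg -E -/(deg e v) dv => /eqP; rewrite -[_ == _]/(k.+1 == k) (gtn_eqF (ltnSn k)).
have wy : w != y by apply/eqP => E; move: ewy; rewrite E Hi.
have dcard : forall X : {set T}, X \subset U -> #|U :\: X| = #|U| - #|X|.
  by move=> X XU; rewrite cardsD (setIidPr XU).
case: (eqVneq x y) => [exy|xy].
-
  subst y.
  have cCx : #|x |: nbhd e x| = k.+1 by rewrite cardsU1 mem Hi -/(deg e x) dxk.
  have vNx : v \in nbhd e x by rewrite mem Hs.
  have ckD : #|(x |: nbhd e x) :\ v| = k.
    by move: cCx; rewrite (cardsD1 v) in_setU1 vNx orbT add1n => -[].
  have [a Ha] : exists a, (a \in nbhd e v) && (a \notin x |: nbhd e x).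
    case: (pickP [pred a | (a \in nbhd e v) && (a \notin x |: nbhd e x)]) => [a Ha|H]; first by exists a.
    have sub : nbhd e v \subset (x |: nbhd e x) :\ v.
      apply/subsetP=> z zv; have := H z; rewrite /= zv /= => /negbFE zx.
      by rewrite in_setD1 zx andbT; apply/eqP => E; move: zv; rewrite E mem Hi.
    by have := subset_leq_card sub; rewrite ckD -/(deg e v) dv ltnn.
  move/andP: Ha => [av anx].
  have eva : e v a by rewrite -mem.
  have NvE : nbhd e v = a |: ((x |: nbhd e x) :\ v).
    apply/eqP; rewrite eq_sym eqEcard; apply/andP; split.
      apply/subsetP=> z; rewrite in_setU1 => /predU1P[->//|]; rewrite in_setD1 => /andP[zv]; rewrite in_setU1 => /predU1P[->|zx]; first by rewrite mem.
      by have := subsetP sA z zx; rewrite in_setU1 (negbTE zv).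
    rewrite cardsU1 in_setD1 (negbTE anx) andbF /= ckD -/(deg e v) dv //.
  have sN : nbhd e v :&: nbhd e a \subset nbhd e x :\ v.
    apply/subsetP=> z; rewrite in_setI NvE => /andP[]; rewrite in_setU1 => /predU1P[->|].
      by rewrite mem Hi.
    rewrite in_setD1 in_setU1 => /andP[zv /predU1P[->|zx]] za.
      by move: anx; rewrite in_setU1 mem (Hs x a) -mem za orbT.
    by rewrite in_setD1 zv zx.
  have cNx : #|nbhd e x :\ v| = k.-1.
    by move: dxk; rewrite /deg (cardsD1 v) vNx add1n => <-.
  have EN : nbhd e v :&: nbhd e a = nbhd e x :\ v.
    by apply/eqP; rewrite eqEcard sN cNx (common G B Hk eva).
  have wa : e a w.
    have : w \in nbhd e x :\ v by rewrite in_setD1 eq_sym vw mem Hs ewy.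
    by rewrite -EN in_setI => /andP[_]; rewrite mem.
  have sub : a |: (x |: nbhd e x) \subset I.
    apply/subsetP=> z; rewrite in_setU1 => /predU1P[->|].
      by rewrite in_setI !in_setU1 !mem eva (Hs w a) wa !orbT.
    rewrite in_setU1 => /predU1P[->|zx].
      by rewrite in_setI !in_setU1 !mem evx ewy !orbT.
    by rewrite in_setI (subsetP sA z zx) (subsetP sB z zx).
  have cI : k.+1 + 1 <= #|I|.
    apply: leq_trans (subset_leq_card sub).
    by rewrite cardsU1 (negbTE anx) cCx addn1.
  set X := x |: (v |: [set w]).
  have cX : #|X| = 4 - 1.
    by rewrite /X !cardsU1 cards1 !inE (negbTE xv) (negbTE xw) (negbTE vw).
  have XU : X \subset U.
    apply/subsetP=> z; rewrite /X !inE => /or3P[] /eqP ->; rewrite ?eqxx ?orbT //.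
    by rewrite evx orbT.
  apply: (closure G (_ : x \in X) XU) => //.
  + by rewrite /X !inE eqxx.
  + move=> z; rewrite /X !inE => /or3P[] /eqP ->.
    * by apply: subset_trans sA _; apply/subsetP=> q qv; rewrite in_setU qv.
    * exact: NUv.
    * exact: NUw.
  + by rewrite dcard // cX; have [] := arith1 cUI cI Hn k1.
  + by have [] := arith1 cUI cI Hn k1.
- set X := x |: (v |: (w |: [set y])).
  have cX : #|X| = 4.
    rewrite /X !cardsU1 cards1 !inE (negbTE xv) (negbTE xw) (negbTE xy) (negbTE vw) (negbTE vy) (negbTE wy) //.
  have XU : X \subset U.
    apply/subsetP=> z; rewrite /X !inE => /or4P[] /eqP ->; rewrite ?eqxx ?orbT //.
    - by rewrite evx orbT.
    - by rewrite ewy !orbT.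
  have cI : k.+1 <= #|I|.
    have sub : v |: (w |: (nbhd e v :&: nbhd e w)) \subset I.
      apply/subsetP=> z; rewrite !inE => /or3P[] .
      - by move=> /eqP ->; rewrite eqxx (Hs w v) evw orbT.
      - by move=> /eqP ->; rewrite eqxx evw orbT.
      - by case/andP=> -> ->; rewrite !orbT.
    apply: leq_trans (subset_leq_card sub).
    rewrite !cardsU1 !inE (negbTE vw) !Hi /= ?andbF /=.
    rewrite !add1n !ltnS -(prednK k1) ltnS; exact: common G B Hk evw.
  apply: (closure G (_ : x \in X) XU) => //.
  + by rewrite /X !inE eqxx.
  + move=> z; rewrite /X !inE => /or4P[] /eqP ->.
    * by apply: subset_trans sA _; apply/subsetP=> q qv; rewrite in_setU qv.
    * exact: NUv.
    * exact: NUw.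
    * by apply: subset_trans sB _; apply/subsetP=> q qv; rewrite in_setU qv orbT.
  + have cI' : k.+1 + 0 <= #|I| by rewrite addn0.
    by rewrite dcard // cX; have [] := arith1 cUI cI' Hn k1.
  + have cI' : k.+1 + 0 <= #|I| by rewrite addn0.
    by have [] := arith1 cUI cI' Hn k1.
Qed.
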